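(* Let $X\subseteq 2^\omega$ be such that for all distinct $x,y\in X$ the set $\{n: x(n)\neq y(n)\}$ is infinite, and let $Y\subseteq X$. Let $N$ be a model of ZFC containing $X$ and $Y$, and let $G$ be $\mathbb{Q}(X,Y)$-generic over $N$. For $n<\omega$ put $U_n^G=\bigcup\{[s]: \exists r\in G\ (n,s)\in r\}$. Then $X\cap\bigcap_{n<\omega}U_n^G = X\setminus Y$.
   Context: For $s\in 2^{<\omega}$, $[s]=\{y\in 2^\omega: s\subseteq y\}$ and $|s|$ is the length of $s$. For $x\in 2^\omega$, $s\in 2^{<\omega}$, $k<\omega$, define $\mathrm{swap}(x,s,k)=\{y\in 2^\omega: s\subseteq y,\ |\{i\geq |s|: y(i)\neq x(i)\}|\leq k\}$. The poset $\mathbb{Q}(X,Y)$ consists of all finite sets $r$ of elements of the form $(n,s)$ with $n<\omega$, $s\in 2^{<\omega}$, or of the form $(n,(x,t,k))$ with $x\in Y$, $t\in 2^{<\omega}$, $n,k<\omega$, subject to the condition: whenever $(n,s)\in r$ and $(n,(x,t,k))\in r$ (same $n$), then $[s]\cap\mathrm{swap}(x,t,k)=\emptyset$. The ordering is reverse inclusion: $r_1\le r_2$ iff $r_1\supseteq r_2$. *)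

(* Defs.v *)
From Stdlib Require Import List Arith.
Import ListNotations.

Definition cantor := nat -> bool.

Definition prefix (s : list bool) (y : cantor) : Prop :=
  forall i, i < length s -> nth i s false = y i.

Definition swapset (x : cantor) (s : list bool) (k : nat) (y : cantor) : Prop :=
  prefix s y /\
  exists l : list nat, length l <= k /\
    (forall i, length s <= i -> y i <> x i -> In i l).

Definition infinitely_different (x y : cantor) : Prop :=
  forall m, exists n, m <= n /\ x n <> y n.

Inductive elt : Type :=
| Basic : nat -> list bool -> elt
| Swap : nat -> cantor -> list bool -> nat -> elt.

Definition cond := elt -> Prop.

Definition finite_cond (r : cond) : Prop :=
  exists l : list elt, forall e, r e <-> In e l.

Definition QXY (X Y : cantor -> Prop) (r : cond) : Prop :=
  finite_cond r /\
  (forall n x t k, r (Swap n x t k) -> Y x) /\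
  (forall n s x t k, r (Basic n s) -> r (Swap n x t k) ->
      forall y, ~ (prefix s y /\ swapset x t k y)).

Definition qle (r1 r2 : cond) : Prop := forall e, r2 e -> r1 e.

Definition dense_in (X Y : cantor -> Prop) (D : cond -> Prop) : Prop :=
  (forall r, D r -> QXY X Y r) /\
  (forall p, QXY X Y p -> exists q, D q /\ qle q p).

Definition qfilter (X Y : cantor -> Prop) (G : cond -> Prop) : Prop :=
  (forall r, G r -> QXY X Y r) /\
  (exists r, G r) /\
  (forall p q, G p -> QXY X Y q -> qle p q -> G q) /\
  (forall p q, G p -> G q -> exists r, G r /\ qle r p /\ qle r q).

(* G is a filter meeting every dense set in the family DN
   (DN represents the dense subsets of Q(X,Y) belonging to the ground model N) *)
Definition generic_over (X Y : cantor -> Prop) (DN : (cond -> Prop) -> Prop)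
  (G : cond -> Prop) : Prop :=
  qfilter X Y G /\
  (forall D, DN D -> dense_in X Y D -> exists r, G r /\ D r).

(* Sets of conditions definable in N from X, Y (hence belonging to N). *)
Definition D_basic (X Y : cantor -> Prop) (x : cantor) (n : nat) : cond -> Prop :=
  fun r => QXY X Y r /\ exists s, r (Basic n s) /\ prefix s x.

Definition D_swap (X Y : cantor -> Prop) (y : cantor) : cond -> Prop :=
  fun r => QXY X Y r /\ exists n t k, r (Swap n y t k) /\ prefix t y.

(* Minimal closure assumption on the ground model N containing X and Y. *)
Definition ground_model_for (X Y : cantor -> Prop) (DN : (cond -> Prop) -> Prop) : Prop :=
  (forall x n, X x -> DN (D_basic X Y x n)) /\
  (forall y, Y y -> DN (D_swap X Y y)).

Definition U_G (G : cond -> Prop) (n : nat) (y : cantor) : Prop :=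
  exists r s, G r /\ r (Basic n s) /\ prefix s y.

(* Main.v *)
Require Import Defs.
From Stdlib Require Import List Arith Lia Classical.
Import ListNotations.

Definition idx (e : elt) : nat := match e with Basic n _ => n | Swap n _ _ _ => n end.
Fixpoint fresh (l : list elt) : nat :=
  match l with [] => 0 | e :: l' => Nat.max (S (idx e)) (fresh l') end.
Lemma fresh_gt l e : In e l -> idx e < fresh l.
Proof. induction l as [|a l IHl]; intros H; [contradiction|]. cbn [fresh]. destruct H as [H|H]; [subst; lia|].
  specialize (IHl H); lia. Qed.

Lemma diffs (x z : cantor) (hd : infinitely_different x z) (m : nat) :
  forall k, exists ps L, NoDup ps /\ length ps = k /\ m <= L /\
    (forall i, In i ps -> m <= i < L /\ x i <> z i).
Proof.
  induction k.
  - exists [], m. split; [constructor|]. split; [auto|]. split; [auto|]. intros j [].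
  - destruct IHk as (ps & L & Hnd & Hl & HmL & Hps).
    destruct (hd L) as (n & Hn & Hxn).
    exists (n :: ps), (S n). split; [|split; [|split]].
    + constructor; auto. intros Hin. specialize (Hps n Hin). lia.
    + simpl; lia.
    + lia.
    + intros i [<-|Hi]; [split; [lia|auto]|]. specialize (Hps i Hi). split; [lia|apply Hps].
Qed.

Definition good (z : cantor) (Y : cantor -> Prop) (nn : nat) (L : nat) (e : elt) : Prop :=
  match e with
  | Basic _ _ => True
  | Swap m x t k => m = nn -> Y x -> exists ps, NoDup ps /\ length ps = S k /\
      forall i, In i ps -> length t <= i < L /\ x i <> z i
  end.

Lemma good_mono z Y nn L L' e : L <= L' -> good z Y nn L e -> good z Y nn L' e.
Proof. destruct e as [|m x t k]; simpl; auto. intros HL H H1 H2. destruct (H H1 H2) as (ps & Ha & Hb & Hc).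
  exists ps; split; [auto|split; [auto|]]. intros i Hi. specialize (Hc i Hi). split; [lia|apply Hc]. Qed.

Lemma good_list (X Y : cantor -> Prop) z nn
  (hX : forall x y, X x -> X y -> x <> y -> infinitely_different x y)
  (hYX : forall y, Y y -> X y) (Xz : X z) (nYz : ~ Y z) :
  forall l : list elt, exists L, forall e, In e l -> good z Y nn L e.
Proof.
  induction l as [|e l IH].
  - exists 0; intros e [].
  - destruct IH as [L2 H2].
    assert (exists L1, good z Y nn L1 e) as [L1 H1].
    { destruct e as [m s|m x t k].
      - exists 0; simpl; auto.
      - destruct (Nat.eq_dec m nn) as [->|ne].
        + destruct (classic (Y x)) as [Yx|nYx].
          * assert (x <> z) by (intros ->; auto).
            destruct (diffs x z (hX x z (hYX x Yx) Xz H) (length t) (S k)) as (ps & L & a & b & c & d).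
            exists L; simpl; intros _ _. exists ps; repeat split; auto; apply d; auto.
          * exists 0; simpl; intros _ Hy; contradiction.
        + exists 0; simpl; intros; contradiction. }
    exists (Nat.max L1 L2). intros e' [<-|Hi].
    + apply (good_mono _ _ _ L1); [lia|auto].
    + apply (good_mono _ _ _ L2); [lia|auto].
Qed.

Lemma prefix_map z L : prefix (map z (seq 0 L)) z.
Proof. intros i Hi. rewrite length_map, length_seq in Hi.
  rewrite (nth_indep _ false (z 0)) by (rewrite length_map, length_seq; auto).
  rewrite map_nth, seq_nth; auto. Qed.

Theorem mainTheorem2 (X Y : cantor -> Prop)
  (hX : forall x y, X x -> X y -> x <> y -> infinitely_different x y)
  (hYX : forall y, Y y -> X y)
  (DN : (cond -> Prop) -> Prop) (hN : ground_model_for X Y DN)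
  (G : cond -> Prop) (hG : generic_over X Y DN G) :
  forall z : cantor, (X z /\ forall n, U_G G n z) <-> (X z /\ ~ Y z).
Proof.
  intros z. destruct hN as [hNb hNs]. destruct hG as [[GQ [Gne [Gup Gdir]]] Gmeet].
  split.
  - intros [Xz HU]. split; auto. intros Yz.
    assert (Hd : dense_in X Y (D_swap X Y z)).
    { split; [intros r [Hr _]; auto|].
      intros p [[lp Hlp] [Hp1 Hp2]].
      set (n := fresh lp).
      exists (fun e => p e \/ e = Swap n z [] 0). split; [|intros e He; left; auto].
      split.
      - split; [|split].
        + exists (Swap n z [] 0 :: lp). intros e; simpl; rewrite Hlp; split; intros [HH|HH]; auto.
        + intros n0 x t k [H|H]; [eapply Hp1; eauto|injection H; intros; subst; auto].
        + intros n0 s x t k [Hb|Hb] [Hs|Hs]; try discriminate.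
          * eapply Hp2; eauto.
          * injection Hs; intros; subst. apply Hlp in Hb. apply fresh_gt in Hb.
            simpl in Hb. unfold n in Hb. lia.
      - exists n, [], 0. split; [right; auto|]. intros i Hi; simpl in Hi; lia. }
    destruct (Gmeet _ (hNs z Yz) Hd) as (r & Gr & _ & n & t & k & Hrs & Ht).
    destruct (HU n) as (r' & s & Gr' & Hrb & Hs).
    destruct (Gdir r r' Gr Gr') as (r'' & Gr'' & H1 & H2).
    destruct (GQ r'' Gr'') as (_ & _ & Hdis).
    apply (Hdis n s z t k (H2 _ Hrb) (H1 _ Hrs) z). split; auto.
    split; auto. exists []. split; simpl; [lia|]. intros i _ Hne; apply Hne; auto.
  - intros [Xz nYz]. split; auto. intros n.
    assert (Hd : dense_in X Y (D_basic X Y z n)).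
    { split; [intros r [Hr _]; auto|].
      intros p [[lp Hlp] [Hp1 Hp2]].
      destruct (good_list X Y z n hX hYX Xz nYz lp) as [L HL].
      set (s := map z (seq 0 L)).
      exists (fun e => p e \/ e = Basic n s). split; [|intros e He; left; auto].
      split; [|exists s; split; [right; auto|apply prefix_map]].
      split; [|split].
      + exists (Basic n s :: lp). intros e; simpl; rewrite Hlp; split; intros [HH|HH]; auto.
      + intros n0 x t k [H|H]; [eapply Hp1; eauto|discriminate].
      + intros n0 s0 x t k [Hb|Hb] [Hs|Hs]; try discriminate.
        * eapply Hp2; eauto.
        * injection Hb; intros; subst. pose proof (Hp1 _ _ _ _ Hs) as Yx.
          apply Hlp in Hs. specialize (HL _ Hs eq_refl Yx).
          destruct HL as (ps & Hnd & Hlen & Hps).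
          intros [Hpy [_ (l & Hl & Hcov)]].
          assert (incl ps l).
          { intros i Hi. destruct (Hps i Hi) as [[Hti HiL] Hxz]. apply Hcov; auto.
            assert (Hlen' : i < length s) by (unfold s; rewrite length_map, length_seq; auto).
            rewrite <- (Hpy i Hlen'). unfold s. rewrite (prefix_map z L i).
            - intros HH; apply Hxz; auto.
            - rewrite length_map, length_seq; auto. }
          pose proof (NoDup_incl_length Hnd H). lia. }
    destruct (Gmeet _ (hNb z n Xz) Hd) as (r & Gr & _ & s & Hb & Hs).
    exists r, s; auto.
Qed.
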